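(* Let $\mathbb{F}$ be a field, $n,m\ge 1$, and $B'_1,\dots,B'_n\in\mathrm{M}(n\times m,\mathbb{F})$. For $v\in\mathbb{F}^m$ let its right degree be the rank of the $n\times n$ matrix $[B'_1v,\dots,B'_nv]$. Let $\mathcal{A}\le\Lambda(n+m,\mathbb{F})$ be spanned by: $A_i=\begin{bmatrix}0&B'_i\\-B'^t_i&0\end{bmatrix}$ for $i\in[n]$; $C_{i,j}=e_ie_j^t-e_je_i^t$ for $1\le i<j\le n$; and $D_{k,\ell}=e_{n+k}e_{n+\ell}^t-e_{n+\ell}e_{n+k}^t$ for $1\le k<\ell\le m$ (here $e_1,\dots,e_{n+m}$ is the standard basis of $\mathbb{F}^{n+m}$). Then there exists a nonzero $v\in\mathbb{F}^m$ of right degree $<n$ if and only if $\mathcal{A}$ has an isotropic space of dimension $2$.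
   Context: $\Lambda(N,\mathbb{F})$ is the space of $N\times N$ alternating matrices. A subspace $U$ is an isotropic space of $\mathcal{A}$ if $u^tAu'=0$ for all $u,u'\in U$, $A\in\mathcal{A}$. *)

(* Defs.v *)
From HB Require Import structures.
From mathcomp Require Import all_boot all_order all_algebra.
Set Implicit Arguments. Unset Strict Implicit. Unset Printing Implicit Defensive.
Import GRing.Theory.
Local Open Scope ring_scope.

Section Defs.
Variables (F : fieldType) (n m : nat).

Definition right_degree (B : 'I_n -> 'M[F]_(n, m)) (v : 'cV[F]_m) : nat :=
  \rank (\matrix_(r < n, c < n) (B c *m v) r 0).

Definition genA (B : 'I_n -> 'M[F]_(n, m)) (i : 'I_n) : 'M[F]_(n + m) :=
  block_mx 0 (B i) (- (B i)^T) 0.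

Definition genC (i j : 'I_n) : 'M[F]_(n + m) :=
  delta_mx (lshift m i) (lshift m j) - delta_mx (lshift m j) (lshift m i).

Definition genD (k l : 'I_m) : 'M[F]_(n + m) :=
  delta_mx (rshift n k) (rshift n l) - delta_mx (rshift n l) (rshift n k).

Definition gens (B : 'I_n -> 'M[F]_(n, m)) : seq 'M[F]_(n + m) :=
  [seq genA B i | i <- enum 'I_n]
  ++ [seq genC p.1 p.2 | p <- enum [pred p : 'I_n * 'I_n | (p.1 < p.2)%N]]
  ++ [seq genD p.1 p.2 | p <- enum [pred p : 'I_m * 'I_m | (p.1 < p.2)%N]].

Definition Aspace (B : 'I_n -> 'M[F]_(n, m)) : {vspace 'M[F]_(n + m)} :=
  <<gens B>>%VS.

End Defs.

Definition isotropic (F : fieldType) (N : nat)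
    (S : {vspace 'M[F]_N}) (U : {vspace 'cV[F]_N}) : Prop :=
  forall u u' A, u \in U -> u' \in U -> A \in S -> u^T *m A *m u' = 0.

(* Main.v *)
Require Import Defs.
From HB Require Import structures.
From mathcomp Require Import all_boot all_order all_algebra.
From mathcomp Require Import ring.
Set Implicit Arguments. Unset Strict Implicit. Unset Printing Implicit Defensive.
Import GRing.Theory.
Local Open Scope ring_scope.
Section HH1.
Variable F : fieldType.

Lemma mx11_eq0 (M : 'M[F]_1) : M = 0 <-> M 0 0 = 0.
Proof.
split=> [->|H]; first by rewrite mxE.
by apply/matrixP=> i j; rewrite !ord1 H mxE.
Qed.

Lemma tr11 (M : 'M[F]_1) : M^T = M.
Proof. by apply/matrixP=> i j; rewrite !ord1 mxE. Qed.

Lemma form_delta N (u w : 'cV[F]_N) a b :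
  (u^T *m delta_mx a b *m w) 0 0 = u a 0 * w b 0.
Proof.
rewrite mxE (bigD1 b) //= big1 => [|k nkb]; last first.
  rewrite mxE big1 ?mul0r // => l _; rewrite !mxE (negbTE nkb) andbF mulr0 //.
rewrite addr0 mxE (bigD1 a) //= big1 => [|l nla]; last by rewrite !mxE (negbTE nla) mulr0.
by rewrite !mxE !eqxx mulr1 addr0.
Qed.

Lemma form_span N (X : seq 'M[F]_N) (u w : 'cV[F]_N) :
  (forall g, g \in X -> u^T *m g *m w = 0) ->
  forall A, A \in <<X>>%VS -> u^T *m A *m w = 0.
Proof.
move=> H A HA.
have := @coord_span _ _ _ (in_tuple X) A HA => ->.
rewrite mulmx_sumr mulmx_suml big1 // => i _.
by rewrite -scalemxAr -scalemxAl H ?scaler0 // mem_nth.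
Qed.

Lemma qformA n m (x1 x2 : 'cV[F]_n) (y1 y2 : 'cV[F]_m) M :
  (col_mx x1 y1)^T *m block_mx 0 M (- M^T) 0 *m col_mx x2 y2
  = x1^T *m M *m y2 - x2^T *m M *m y1.
Proof.
rewrite tr_col_mx mul_row_block mul_row_col !mulmx0 add0r addr0 addrC.
congr (_ + _); rewrite mulmxN mulNmx; congr (- _).
by rewrite -[RHS]tr11 !trmx_mul trmxK mulmxA.
Qed.

Lemma subE11 (A B : 'M[F]_1) : (A - B) 0 0 = A 0 0 - B 0 0.
Proof. by rewrite !mxE. Qed.

Lemma qformC n m (u w : 'cV[F]_(n + m)) i j :
  (u^T *m genC F m i j *m w) 0 0 =
  u (lshift m i) 0 * w (lshift m j) 0 - u (lshift m j) 0 * w (lshift m i) 0.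
Proof. by rewrite /genC mulmxBr mulmxBl subE11 !form_delta. Qed.

Lemma qformD n m (u w : 'cV[F]_(n + m)) i j :
  (u^T *m genD F n i j *m w) 0 0 =
  u (rshift n i) 0 * w (rshift n j) 0 - u (rshift n j) 0 * w (rshift n i) 0.
Proof. by rewrite /genD mulmxBr mulmxBl subE11 !form_delta. Qed.

End HH1.
Section HH2.
Variable F : fieldType.

Lemma rdE n m (B : 'I_n -> 'M[F]_(n,m)) (x : 'cV[F]_n) (y : 'cV[F]_m) c :
  (x^T *m \matrix_(r < n, c < n) (B c *m y) r 0) 0 c = (x^T *m B c *m y) 0 0.
Proof. by rewrite -mulmxA !mxE; apply: eq_bigr => r _; rewrite !mxE. Qed.

Lemma nz_row p q (M : 'M[F]_(p, q)) : M != 0 -> exists i, row i M != 0.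
Proof.
move=> HM; apply/existsP; apply: contraR HM; rewrite negb_exists => /forallP H.
apply/eqP/row_matrixP => i; rewrite row0; exact/eqP/negbNE/H.
Qed.

Lemma nz_entry p q (M : 'M[F]_(p, q)) : M != 0 -> exists i j, M i j != 0.
Proof.
move=> HM; have: [exists i, exists j, M i j != 0].
  apply: contraR HM; rewrite negb_exists => /forallP H.
  apply/eqP/matrixP => i j; rewrite mxE.
  by move: (H i); rewrite negb_exists => /forallP /(_ j) /negbNE /eqP.
by case/existsP => i /existsP [j] ?; exists i, j.
Qed.

Lemma rd_lt n m (B : 'I_n -> 'M[F]_(n,m)) y :
  (right_degree B y < n)%N <-> exists x : 'cV[F]_n, x != 0 /\ forall c, x^T *m B c *m y = 0.
Proof.
rewrite /right_degree; set M := \matrix_(r < n, c < n) _.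
split=> [Hr|[x [nx0 Hx]]].
  have: kermx M != 0.
    apply/eqP => H0; move: (mxrank_ker M); rewrite H0 mxrank0 => /eqP.
    by rewrite eq_sym subn_eq0 leqNgt Hr.
  case/nz_row => i Hi; exists (row i (kermx M))^T; split; first by rewrite trmx_eq0.
  move=> c; apply/mx11_eq0; rewrite -rdE trmxK -row_mul mulmx_ker row0 mxE //.
rewrite ltn_neqAle rank_leq_row andbT; apply/negP => /eqP Hf.
have Hfree : row_free M by rewrite /row_free Hf.
have : x^T *m M == 0.
  apply/eqP/matrixP => i c; rewrite (ord1 i) rdE Hx !mxE //.
by rewrite mulmx_free_eq0 // trmx_eq0 (negbTE nx0).
Qed.

Lemma prop_lemma k (p q : 'cV[F]_k) :
  (forall i j, p i 0 * q j 0 = p j 0 * q i 0) ->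
  exists r a b, p = a *: r /\ q = b *: r /\ (r = 0 -> p = 0 /\ q = 0).
Proof.
move=> H; have [->|p0] := eqVneq p 0.
  by exists q, 0, 1; rewrite scale0r scale1r; split => //; split.
case/nz_entry: (p0) => i [j]; rewrite (ord1 j) => pi0.
exists p, 1, (q i 0 / p i 0); rewrite scale1r; split=> //; split; last by move=> pz; rewrite pz eqxx in p0.
apply/matrixP => l z; rewrite (ord1 z) !mxE.
apply: (mulIf pi0); rewrite mulrAC divfK // mulrC H mulrC //.
Qed.

End HH2.
Section HH3.
Variable F : fieldType.

Lemma free2 (vT : vectType F) (u1 u2 : vT) : free [:: u1; u2] ->
  forall s t, s *: u1 + t *: u2 = 0 -> s = 0 /\ t = 0.
Proof.
rewrite free_cons seq1_free span_seq1 => /andP [nin nz] s t H.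
have [s0|s0] := eqVneq s 0.
  move: H; rewrite s0 scale0r add0r => /eqP; rewrite scaler_eq0 (negbTE nz) orbF.
  by move/eqP.
case/negP: nin; apply/vlineP; exists (- t / s).
move/eqP: H; rewrite addr_eq0 => /eqP H.
by rewrite -[u1]scale1r -(mulVf s0) -scalerA H -scaleNr scalerA mulrC.
Qed.

Lemma comb n m (x : 'cV[F]_n) (y : 'cV[F]_m) a b c d s t :
  s *: col_mx (a *: x) (c *: y) + t *: col_mx (b *: x) (d *: y) =
  col_mx ((s*a + t*b) *: x) ((s*c + t*d) *: y).
Proof. by rewrite !scale_col_mx add_col_mx !scalerA !scalerDl. Qed.

Lemma formZZ n m (x : 'cV[F]_n) (M : 'M[F]_(n, m)) (y : 'cV[F]_m) a d :
  (a *: x)^T *m M *m (d *: y) = (a * d) *: (x^T *m M *m y).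
Proof.
have -> : (a *: x)^T = a *: x^T by apply/matrixP => i j; rewrite !mxE.
by rewrite linearZ /= -!scalemxAl scalerA mulrC.
Qed.

Lemma sym_ext k (f : 'I_k -> 'I_k -> F) :
  (forall i j : 'I_k, (i < j)%N -> f i j = f j i) -> forall i j, f i j = f j i.
Proof.
move=> H i j; case: (ltngtP (val i) (val j)) => [/H //|/H -> //|/val_inj -> //].
Qed.

Lemma memA n m (B : 'I_n -> 'M[F]_(n, m)) c : genA B c \in gens B.
Proof. by rewrite /gens mem_cat map_f ?mem_enum. Qed.

Lemma memC n m (B : 'I_n -> 'M[F]_(n, m)) (i j : 'I_n) : (i < j)%N -> genC F m i j \in gens B.
Proof.
move=> ij; rewrite /gens mem_cat orbC mem_cat.
by rewrite (map_f (fun p : 'I_n * 'I_n => genC F m p.1 p.2) (x := (i, j))) // ?orbT // mem_enum inE.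
Qed.

Lemma memD n m (B : 'I_n -> 'M[F]_(n, m)) (i j : 'I_m) : (i < j)%N -> genD F n i j \in gens B.
Proof.
move=> ij; rewrite /gens mem_cat orbC mem_cat orbC.
by rewrite (map_f (fun p : 'I_m * 'I_m => genD F n p.1 p.2) (x := (i, j))) // ?orbT // mem_enum inE.
Qed.

End HH3.
Unset Implicit Arguments.
Theorem claim7p4 (F : fieldType) (n m : nat) (hn : (1 <= n)%N) (hm : (1 <= m)%N)
    (B : 'I_n -> 'M[F]_(n, m)) :
  (exists v : 'cV[F]_m, v != 0 /\ (right_degree B v < n)%N) <->
  (exists U : {vspace 'cV[F]_(n + m)}, \dim U = 2%N /\ isotropic (Aspace B) U).
Proof.
split.
  move=> [v [v0 /rd_lt [x [x0 Hx]]]].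
  set p : 'cV[F]_(n + m) := col_mx x 0; set q : 'cV[F]_(n + m) := col_mx 0 v.
  exists <<[:: p; q]>>%VS; split.
    have Hf : free [:: p; q].
      rewrite free_cons seq1_free span_seq1; apply/andP; split.
        apply/vlineP => -[k Hk]; move: Hk; rewrite /p /q scale_col_mx scaler0.
        by case/eq_col_mx => Hx0 _; rewrite Hx0 eqxx in x0.
      rewrite /q; apply: contraNneq v0 => /eqP.
      by rewrite -col_mx0 => /eqP /(eq_col_mx) [_ ->].
    exact: (eqP Hf).
  have Hmem : forall u, u \in <<[:: p; q]>>%VS -> exists s t, u = col_mx (s *: x) (t *: v).
    move=> u; rewrite span_cons span_seq1 => /memv_addP [w1 /vlineP [s ->] [w2 /vlineP [t ->] ->]].
    exists s, t; rewrite /p /q !scale_col_mx !scaler0 add_col_mx addr0 add0r //.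
  move=> u u' A /Hmem [s [t ->]] /Hmem [s' [t' ->]] HA.
  apply: (form_span _ HA) => g /[!mem_cat] /orP [|/orP []] /mapP [z Hz ->].
  - by rewrite /genA qformA !formZZ !Hx !scaler0 subrr.
  - apply/mx11_eq0; rewrite qformC !col_mxEu !mxE; ring.
  - apply/mx11_eq0; rewrite qformD !col_mxEd !mxE; ring.
move=> [U [hdim Hiso]].
have [X [HX [HXs HXm]]] : exists X : seq _, free X /\ size X = 2%N /\ {subset X <= U}.
  exists (vbasis U); split; first exact: basis_free (vbasisP U).
  split; first by rewrite size_tuple hdim.
  by move=> v; apply: vbasis_mem.
case: X HX HXs HXm => [|u1 [|u2 [|]]] // HX _ HXm.
have ind := free2 HX.
have iso : forall g, g \in gens B -> u1^T *m g *m u2 = 0.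
  move=> g Hg; apply: Hiso; rewrite ?HXm ?inE ?eqxx ?orbT //.
  exact: memv_span.
set x1 := usubmx u1; set y1 := dsubmx u1; set x2 := usubmx u2; set y2 := dsubmx u2.
have E1 : u1 = col_mx x1 y1 by rewrite vsubmxK.
have E2 : u2 = col_mx x2 y2 by rewrite vsubmxK.
have Cx : forall i j : 'I_n, x1 i 0 * x2 j 0 = x1 j 0 * x2 i 0.
  move=> i0 j0; apply: (@sym_ext F n (fun i j => x1 i 0 * x2 j 0)) => i j ij.
  move/mx11_eq0: (iso _ (memC B ij)); rewrite qformC !mxE => /eqP; rewrite subr_eq0 => /eqP //.
have Cy : forall i j : 'I_m, y1 i 0 * y2 j 0 = y1 j 0 * y2 i 0.
  move=> i0 j0; apply: (@sym_ext F m (fun i j => y1 i 0 * y2 j 0)) => i j ij.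
  move/mx11_eq0: (iso _ (memD B ij)); rewrite qformD !mxE => /eqP; rewrite subr_eq0 => /eqP //.
have CA : forall c, x1^T *m B c *m y2 - x2^T *m B c *m y1 = 0.
  by move=> c; rewrite -qformA -E1 -E2 iso // memA.
have [x [a [b [Ex1 [Ex2 Hx0]]]]] := prop_lemma Cx.
have [y [c [d [Ey1 [Ey2 Hy0]]]]] := prop_lemma Cy.
rewrite Ex1 Ey1 in E1; rewrite Ex2 Ey2 in E2.
have u1nz : u1 != 0.
  apply/eqP => h; have := ind 1 0; rewrite h scaler0 scale0r addr0 => /(_ erefl) [].
  by move/eqP; rewrite oner_eq0.
have k0 : a * d - b * c != 0.
  apply/eqP => hk.
  have [hd hc] : d = 0 /\ - c = 0.
    apply: ind; rewrite E1 E2 comb.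
    have -> : d * a + - c * b = 0 by rewrite -hk; ring.
    have -> : d * c + - c * d = 0 by ring.
    by rewrite !scale0r col_mx0.
  have [hb ha] : b = 0 /\ - a = 0.
    apply: ind; rewrite E1 E2 comb.
    have -> : b * a + - a * b = 0 by ring.
    have -> : b * c + - a * d = 0 by rewrite -oppr0 -hk; ring.
    by rewrite !scale0r col_mx0.
  move/eqP: ha; rewrite oppr_eq0 => /eqP ha.
  move/eqP: hc; rewrite oppr_eq0 => /eqP hc.
  by move/negP: u1nz; apply; rewrite E1 ha hc !scale0r col_mx0.
exists y; split.
  apply/eqP => y0.
  have [hb ha] : b = 0 /\ - a = 0.
    apply: ind; rewrite E1 E2 comb y0 !scaler0.
    have -> : b * a + - a * b = 0 by ring.
    by rewrite scale0r col_mx0.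
  move/eqP: ha; rewrite oppr_eq0 => /eqP ha.
  by move: k0; rewrite ha hb !mul0r subrr eqxx.
apply/rd_lt; exists x; split.
  apply/eqP => x0.
  have [hd hc] : d = 0 /\ - c = 0.
    apply: ind; rewrite E1 E2 comb x0 !scaler0.
    have -> : d * c + - c * d = 0 by ring.
    by rewrite scale0r col_mx0.
  move/eqP: hc; rewrite oppr_eq0 => /eqP hc.
  by move: k0; rewrite hc hd !mulr0 subrr eqxx.
move=> c0; move: (CA c0); rewrite Ex1 Ey2 Ex2 Ey1 !formZZ -scalerBl => /eqP.
rewrite scaler_eq0 (negbTE k0) /= => /eqP //.
Qed.
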